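(* Let $T$ be an attack-defence tree and $\llbracket T\rrbracket$ its encoding in the rewrite theory $\mathcal{R}_{ADT}$ described in the context. If the minimal time to perform the main (root) attack in $T$ is $t$, then there exist $a$, $SA$ and $SD$ such that $\mathcal{R}_{ADT} \vdash \llbracket T\rrbracket \to^{!} [a,t,SA,SD]$.
   Context: An attack-defence tree (ADTree) $T$ is a tree whose leaves are attack actions (each with a time and a cost) or defence actions, and whose inner nodes are gates: OR (unordered children, succeeds iff some child succeeds), AND (unordered children in parallel, succeeds iff all succeed), SAND (ordered children executed sequentially), and NOT (single child, succeeds iff the child fails; encodes counter-defence gates). Gates may carry their own time and cost. The time of an attack on the root is computed bottom-up: maximum over AND children, sum over SAND children, the chosen child for OR, plus each gate's own time. Rewrite theory $\mathcal{R}_{ADT}$: each node is an object with attributes time, cost, agents (1 for attack leaves, 0 for gates), accumulated time acctime and cost (initially 0), a set used, its children, and a status in $\{\mathrm{Unknown},\mathrm{Succeed},\mathrm{Fail}\}$ initially Unknown; $\llbracket T\rrbracket=\{Q;Cnf\}$ with $Q$ the root and $Cnf$ the multiset of node objects. Rules: Unknown attack/defence leaves may become Succeed or Fail. OR: a Succeed pending child $o$ makes the Unknown gate Succeed, empties its pending children, records $o$ in used, sets acctime/cost to the gate's own plus $o$'s accumulated values and agents to $o$'s; Fail children are removed; no pending children makes it Fail. AND: Succeed children are removed from pending and recorded, acctime combined by max and agents by sum; a Fail child makes it Fail; no pending children makes it Succeed. SAND: a Succeed first child is removed and recorded, acctime combined by sum and agents by max; failing first child gives Fail; empty list gives Succeed.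 NOT: child Succeed gives Fail, child Fail gives Succeed. END: when the root is Succeed, $\{Q;Cnf\}$ rewrites to the summary term $[a,t,SA,SD]$ of the root's agents $a$, accumulated time $t$, the set $SA$ of used attacks and the set $SD$ of active defences. $\mathcal{R}\vdash u\to^{!}u'$ means $u$ rewrites in zero or more steps to an irreducible $u'$. *)

(* Defs.v *)
From Stdlib Require Import List Relations.
From mathcomp Require Import all_boot.
Set Implicit Arguments. Unset Strict Implicit. Unset Printing Implicit Defensive.

Inductive adt : Type :=
| AttL  (time cost : nat)
| DefL
| OrG   (time cost : nat) (cs : seq adt)
| AndG  (time cost : nat) (cs : seq adt)
| SandG (time cost : nat) (cs : seq adt)
| NotG  (time cost : nat) (c : adt).

(* Attack semantics: [succ T t] = there is an attack scenario (choice  *)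
(* of success/failure of the leaves and of the child chosen at OR      *)
(* gates) in which the root of T succeeds with time t, computed        *)
(* bottom-up; [fails T] = there is a scenario in which T fails.        *)
Inductive succ : adt -> nat -> Prop :=
| succ_att ti co : succ (AttL ti co) ti
| succ_def : succ DefL 0
| succ_or ti co cs c t :
    List.In c cs -> succ c t -> succ (OrG ti co cs) (ti + t)
| succ_and ti co cs ts :
    size ts = size cs ->
    (forall i, i < size cs -> succ (nth DefL cs i) (nth 0 ts i)) ->
    succ (AndG ti co cs) (ti + foldr maxn 0 ts)
| succ_sand ti co cs ts :
    size ts = size cs ->
    (forall i, i < size cs -> succ (nth DefL cs i) (nth 0 ts i)) ->
    succ (SandG ti co cs) (ti + sumn ts)
| succ_not ti co c : fails c -> succ (NotG ti co c) ti
with fails : adt -> Prop :=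
| fails_att ti co : fails (AttL ti co)
| fails_def : fails DefL
| fails_or ti co cs : (forall c, List.In c cs -> fails c) -> fails (OrG ti co cs)
| fails_and ti co cs c : List.In c cs -> fails c -> fails (AndG ti co cs)
| fails_sand ti co pre c post :
    (forall d, List.In d pre -> exists t, succ d t) -> fails c ->
    fails (SandG ti co (pre ++ c :: post))
| fails_not ti co c t : succ c t -> fails (NotG ti co c).

Definition min_time (T : adt) (t : nat) : Prop :=
  succ T t /\ forall t', succ T t' -> t <= t'.

Inductive status := Unknown | Succeed | Fail.
Inductive kind := KAtt | KDef | KOr | KAnd | KSand | KNot.

Definition is_katt (k : kind) : bool := if k is KAtt then true else false.
Definition is_kdef (k : kind) : bool := if k is KDef then true else false.

Definition status_eqb (a b : status) : bool :=
  match a, b with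
  | Unknown, Unknown | Succeed, Succeed | Fail, Fail => true
  | _, _ => false end.

Record obj := Obj {
  oid : nat;
  okind : kind;
  otime : nat;
  ocost : nat;
  agents : nat;
  acctime : nat;
  acccost : nat;
  used : seq nat;        (* used nodes (recorded transitively) *)
  pending : seq nat;     (* children still pending (ordered for SAND) *)
  ostatus : status }.

Definition set_status (o : obj) s :=
  Obj (oid o) (okind o) (otime o) (ocost o) (agents o) (acctime o) (acccost o)
      (used o) (pending o) s.

(* configuration term {Q ; Cnf} or summary term [a, t, SA, SD] *)
Inductive term :=
| Conf (q : nat) (cnf : seq obj)
| Summary (a t : nat) (SA SD : seq nat).

Definition lookup (cnf : seq obj) (i : nat) : option obj :=
  ohead [seq o <- cnf | oid o == i].

Definition upd (cnf : seq obj) (o : obj) : seq obj :=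
  [seq if oid o' == oid o then o else o' | o' <- cnf].

Definition is_att (cnf : seq obj) (i : nat) : bool :=
  if lookup cnf i is Some o then is_katt (okind o) else false.

Inductive step : term -> term -> Prop :=
| r_att_succ q cnf o : List.In o cnf -> okind o = KAtt -> ostatus o = Unknown ->
    step (Conf q cnf) (Conf q (upd cnf
      (Obj (oid o) KAtt (otime o) (ocost o) (agents o) (otime o) (ocost o)
           (used o) (pending o) Succeed)))
| r_def_succ q cnf o : List.In o cnf -> okind o = KDef -> ostatus o = Unknown ->
    step (Conf q cnf) (Conf q (upd cnf (set_status o Succeed)))
| r_leaf_fail q cnf o : List.In o cnf -> (okind o = KAtt \/ okind o = KDef) ->
    ostatus o = Unknown ->
    step (Conf q cnf) (Conf q (upd cnf (set_status o Fail)))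
| r_or_succ q cnf g c oc : List.In g cnf -> okind g = KOr -> ostatus g = Unknown ->
    c \in pending g -> lookup cnf c = Some oc -> ostatus oc = Succeed ->
    step (Conf q cnf) (Conf q (upd cnf
      (Obj (oid g) KOr (otime g) (ocost g) (agents oc)
           (otime g + acctime oc) (ocost g + acccost oc)
           (c :: used oc ++ used g) [::] Succeed)))
| r_or_rm q cnf g c oc : List.In g cnf -> okind g = KOr -> ostatus g = Unknown ->
    c \in pending g -> lookup cnf c = Some oc -> ostatus oc = Fail ->
    step (Conf q cnf) (Conf q (upd cnf
      (Obj (oid g) KOr (otime g) (ocost g) (agents g) (acctime g) (acccost g)
           (used g) (rem c (pending g)) Unknown)))
| r_or_fail q cnf g : List.In g cnf -> okind g = KOr -> ostatus g = Unknown ->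
    pending g = [::] -> step (Conf q cnf) (Conf q (upd cnf (set_status g Fail)))
| r_and_rm q cnf g c oc : List.In g cnf -> okind g = KAnd -> ostatus g = Unknown ->
    c \in pending g -> lookup cnf c = Some oc -> ostatus oc = Succeed ->
    step (Conf q cnf) (Conf q (upd cnf
      (Obj (oid g) KAnd (otime g) (ocost g) (agents g + agents oc)
           (maxn (acctime g) (acctime oc)) (acccost g + acccost oc)
           (c :: used oc ++ used g) (rem c (pending g)) Unknown)))
| r_and_fail q cnf g c oc : List.In g cnf -> okind g = KAnd -> ostatus g = Unknown ->
    c \in pending g -> lookup cnf c = Some oc -> ostatus oc = Fail ->
    step (Conf q cnf) (Conf q (upd cnf (set_status g Fail)))
| r_and_succ q cnf g : List.In g cnf -> okind g = KAnd -> ostatus g = Unknown ->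
    pending g = [::] ->
    step (Conf q cnf) (Conf q (upd cnf
      (Obj (oid g) KAnd (otime g) (ocost g) (agents g)
           (otime g + acctime g) (ocost g + acccost g) (used g) [::] Succeed)))
| r_sand_rm q cnf g c rest oc : List.In g cnf -> okind g = KSand ->
    ostatus g = Unknown -> pending g = c :: rest ->
    lookup cnf c = Some oc -> ostatus oc = Succeed ->
    step (Conf q cnf) (Conf q (upd cnf
      (Obj (oid g) KSand (otime g) (ocost g) (maxn (agents g) (agents oc))
           (acctime g + acctime oc) (acccost g + acccost oc)
           (c :: used oc ++ used g) rest Unknown)))
| r_sand_fail q cnf g c rest oc : List.In g cnf -> okind g = KSand ->
    ostatus g = Unknown -> pending g = c :: rest ->
    lookup cnf c = Some oc -> ostatus oc = Fail ->
    step (Conf q cnf) (Conf q (upd cnf (set_status g Fail)))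
| r_sand_succ q cnf g : List.In g cnf -> okind g = KSand -> ostatus g = Unknown ->
    pending g = [::] ->
    step (Conf q cnf) (Conf q (upd cnf
      (Obj (oid g) KSand (otime g) (ocost g) (agents g)
           (otime g + acctime g) (ocost g + acccost g) (used g) [::] Succeed)))
| r_not_fail q cnf g c oc : List.In g cnf -> okind g = KNot -> ostatus g = Unknown ->
    pending g = [:: c] -> lookup cnf c = Some oc -> ostatus oc = Succeed ->
    step (Conf q cnf) (Conf q (upd cnf (set_status g Fail)))
| r_not_succ q cnf g c oc : List.In g cnf -> okind g = KNot -> ostatus g = Unknown ->
    pending g = [:: c] -> lookup cnf c = Some oc -> ostatus oc = Fail ->
    step (Conf q cnf) (Conf q (upd cnf
      (Obj (oid g) KNot (otime g) (ocost g) 0 (otime g) (ocost g)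
           (used g) [::] Succeed)))
| r_end q cnf r : lookup cnf q = Some r -> ostatus r = Succeed ->
    step (Conf q cnf)
      (Summary (agents r) (acctime r)
         [seq i <- (if is_katt (okind r) then q :: used r else used r)
            | is_att cnf i]
         [seq oid o | o <- cnf & is_kdef (okind o) &&
                                 status_eqb (ostatus o) Succeed]).

Definition irreducible (u : term) : Prop := forall v, ~ step u v.
Definition rewrites_to_nf (u u' : term) : Prop :=
  clos_refl_trans term step u u' /\ irreducible u'.

(* Encoding [[T]]: nodes get identifiers in preorder starting at n;    *)
(* returns the objects and the next free identifier.                   *)
Definition mk_node (i : nat) (k : kind) (ti co ag : nat) (ch : seq nat) : obj :=
  Obj i k ti co ag 0 0 [::] ch Unknown.

Fixpoint enc (T : adt) (n : nat) : seq obj * nat :=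
  let encl := fix encl (cs : seq adt) (k : nat) : seq obj * seq nat * nat :=
    match cs with
    | [::] => ([::], [::], k)
    | c :: cs' =>
        let (o1, k1) := enc c k in
        let '(o2, ids, k2) := encl cs' k1 in (o1 ++ o2, k :: ids, k2)
    end in
  match T with
  | AttL ti co => ([:: mk_node n KAtt ti co 1 [::]], n.+1)
  | DefL => ([:: mk_node n KDef 0 0 0 [::]], n.+1)
  | OrG ti co cs => let '(os, ids, m) := encl cs n.+1 in
                    (mk_node n KOr ti co 0 ids :: os, m)
  | AndG ti co cs => let '(os, ids, m) := encl cs n.+1 in
                    (mk_node n KAnd ti co 0 ids :: os, m)
  | SandG ti co cs => let '(os, ids, m) := encl cs n.+1 in
                    (mk_node n KSand ti co 0 ids :: os, m)
  | NotG ti co c => let (os, m) := enc c n.+1 in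
                    (mk_node n KNot ti co 0 [:: n.+1] :: os, m)
  end.

Definition encode (T : adt) : term := Conf 0 (enc T 0).1.

(* Main.v *)
Require Import Defs.
From mathcomp Require Import all_boot.
From Stdlib Require Import Relations.Relation_Operators.
Set Implicit Arguments. Unset Strict Implicit. Unset Printing Implicit Defensive.

Fixpoint encl (cs : seq adt) (k : nat) : seq obj * seq nat * nat :=
  match cs with
  | [::] => ([::], [::], k)
  | c :: cs' =>
      let (o1, k1) := enc c k in
      let '(o2, ids, k2) := encl cs' k1 in (o1 ++ o2, k :: ids, k2)
  end.

Lemma encl_cons c cs k : encl (c :: cs) k =
  ((enc c k).1 ++ (encl cs (enc c k).2).1.1, k :: (encl cs (enc c k).2).1.2,
   (encl cs (enc c k).2).2).
Proof. by rewrite /=; case: (enc c k) => o1 k1 /=; case: (encl cs k1) => [[]]. Qed.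

Definition gate (K : kind) ti co cs n :=
  (mk_node n K ti co 0 (encl cs n.+1).1.2 :: (encl cs n.+1).1.1, (encl cs n.+1).2).

Lemma enc_Or ti co cs n : enc (OrG ti co cs) n = gate KOr ti co cs n.
Proof. change (enc (OrG ti co cs) n) with (let '(os, ids, m) := encl cs n.+1 in
                    (mk_node n KOr ti co 0 ids :: os, m)).
by rewrite /gate; case: (encl cs n.+1) => [[]]. Qed.
Lemma enc_And ti co cs n : enc (AndG ti co cs) n = gate KAnd ti co cs n.
Proof. change (enc (AndG ti co cs) n) with (let '(os, ids, m) := encl cs n.+1 in
                    (mk_node n KAnd ti co 0 ids :: os, m)).
by rewrite /gate; case: (encl cs n.+1) => [[]]. Qed.
Lemma enc_Sand ti co cs n : enc (SandG ti co cs) n = gate KSand ti co cs n.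
Proof. change (enc (SandG ti co cs) n) with (let '(os, ids, m) := encl cs n.+1 in
                    (mk_node n KSand ti co 0 ids :: os, m)).
by rewrite /gate; case: (encl cs n.+1) => [[]]. Qed.
Lemma enc_Not ti co c n : enc (NotG ti co c) n =
  (mk_node n KNot ti co 0 [:: n.+1] :: (enc c n.+1).1, (enc c n.+1).2).
Proof. by rewrite /=; case: (enc c n.+1). Qed.

Definition adt_ind2 (P : adt -> Prop)
  (HA : forall ti co, P (AttL ti co)) (HD : P DefL)
  (HO : forall ti co cs, (forall c, List.In c cs -> P c) -> P (OrG ti co cs))
  (HAn : forall ti co cs, (forall c, List.In c cs -> P c) -> P (AndG ti co cs))
  (HS : forall ti co cs, (forall c, List.In c cs -> P c) -> P (SandG ti co cs))
  (HN : forall ti co c, P c -> P (NotG ti co c)) : forall T, P T :=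
  fix F (T : adt) : P T :=
  let L := fix L (cs : seq adt) : forall c, List.In c cs -> P c :=
    match cs return forall c, List.In c cs -> P c with
    | [::] => fun c (H : List.In c [::]) => False_ind _ H
    | c0 :: cs' => fun c (H : List.In c (c0 :: cs')) =>
        match H with
        | or_introl E => eq_ind c0 P (F c0) c E
        | or_intror H' => L cs' c H'
        end
    end in
  match T with
  | AttL ti co => HA ti co
  | DefL => HD
  | OrG ti co cs => HO ti co cs (L cs)
  | AndG ti co cs => HAn ti co cs (L cs)
  | SandG ti co cs => HS ti co cs (L cs)
  | NotG ti co c => HN ti co c (F c)
  end.

Definition oids (s : seq obj) := map oid s.
Definition inr_ (a b : nat) (s : seq obj) := all (fun i => a <= i < b) (oids s).

Lemma inr_cat a b s1 s2 : inr_ a b (s1 ++ s2) = inr_ a b s1 && inr_ a b s2.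
Proof. by rewrite /inr_ /oids map_cat all_cat. Qed.

Lemma inr_weak a b a' b' s : a' <= a -> b <= b' -> inr_ a b s -> inr_ a' b' s.
Proof.
move=> h1 h2 /allP H; apply/allP => i /H /andP [x y].
apply/andP; split; [exact: leq_trans h1 x | exact: leq_trans y h2].
Qed.

Definition encl_range cs k :=
  k <= (encl cs k).2 /\ inr_ k (encl cs k).2 (encl cs k).1.1 /\
  size (encl cs k).1.2 = size cs.

Lemma encl_range_gen cs :
  (forall c, List.In c cs -> forall n, n < (enc c n).2 /\ inr_ n (enc c n).2 (enc c n).1) ->
  forall k, encl_range cs k.
Proof.
elim: cs => [|c cs IH] H k; first by rewrite /encl_range /= leqnn.
rewrite /encl_range encl_cons /=.
have [h1 h2] := H c (or_introl erefl) k.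
have [h3 [h4 h5]] := IH (fun c' hc => H c' (or_intror hc)) (enc c k).2.
split; first by apply: leq_trans h3; exact: ltnW.
split; last by rewrite h5.
rewrite inr_cat; apply/andP; split.
- exact: inr_weak h2.
- apply: inr_weak h4 => //; exact: ltnW.
Qed.

Lemma enc_range T : forall n, n < (enc T n).2 /\ inr_ n (enc T n).2 (enc T n).1.
Proof.
elim/adt_ind2: T => [ti co|| ti co cs IH | ti co cs IH | ti co cs IH | ti co c IH] n;
  rewrite ?enc_Or ?enc_And ?enc_Sand ?enc_Not /=; try by rewrite /inr_ /oids /= ?leqnn ?ltnSn.
1-3: have [h1 [h2 _]] := encl_range_gen IH n.+1; split; first by [];
     rewrite /inr_ /oids /= ?leqnn h1 /=; apply: inr_weak h2 => //.
have [h1 h2] := IH n.+1; split; first by apply: ltn_trans h1.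
by rewrite /inr_ /oids /= leqnn (ltn_trans (ltnSn n) h1) /=; apply: inr_weak h2 => //; exact: ltnW.
Qed.

Lemma encl_range_all cs k : encl_range cs k.
Proof. apply: encl_range_gen => c _ n; exact: enc_range. Qed.

Lemma enc_head T n : exists h r, (enc T n).1 = h :: r /\ oid h = n.
Proof.
case: T => [ti co||ti co cs|ti co cs|ti co cs|ti co c];
rewrite ?enc_Or ?enc_And ?enc_Sand ?enc_Not /=; by do 2 eexists.
Qed.

Definition disj (a b : seq nat) := forall i, i \in a -> i \notin b.

Lemma upd_oids s o : oids (upd s o) = oids s.
Proof. by elim: s => //= o' s IH; rewrite IH; case: eqP => // ->. Qed.

Lemma upd_notin s o : oid o \notin oids s -> upd s o = s.
Proof.
elim: s => //= o' s IH; rewrite inE negb_or => /andP [h1 h2].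
by rewrite IH // eq_sym (negbTE h1).
Qed.

Lemma upd_cat a b o : upd (a ++ b) o = upd a o ++ upd b o.
Proof. exact: map_cat. Qed.

Lemma upd_frame pre seg post o : oid o \in oids seg -> disj (oids pre) (oids seg) ->
  disj (oids post) (oids seg) -> upd (pre ++ seg ++ post) o = pre ++ upd seg o ++ post.
Proof.
move=> hin d1 d2; rewrite !upd_cat (@upd_notin pre) ?(@upd_notin post) //.
- by apply/negP => /d2; rewrite hin.
- by apply/negP => /d1; rewrite hin.
Qed.

Lemma lookup_cat a b i :
  lookup (a ++ b) i = if lookup a i is Some o then Some o else lookup b i.
Proof. by rewrite /lookup filter_cat; case: [seq o <- a | oid o == i]. Qed.

Lemma lookup_none a i : i \notin oids a -> lookup a i = None.
Proof.
rewrite /oids /lookup; elim: a => //= o a IH; rewrite inE negb_or => /andP [h1 h2].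
by rewrite eq_sym (negbTE h1) /= IH.
Qed.

Lemma lookup_some a i o : lookup a i = Some o -> List.In o a /\ oid o = i.
Proof.
elim: a => //= o' a IH; rewrite /lookup /=; case: eqP => [e [<-]|_ h].
- by split; [left|].
- by have [h1 h2] := IH h; split; [right|].
Qed.

Lemma In_oids o s : List.In o s -> oid o \in oids s.
Proof. elim: s => //= o' s IH [->|/IH h]; rewrite inE ?eqxx ?h ?orbT //. Qed.

Lemma lookup_in a i o : lookup a i = Some o -> i \in oids a.
Proof. by move=> /lookup_some [h <-]; exact: In_oids. Qed.

Lemma lookup_frame pre seg post c oc : lookup seg c = Some oc ->
  disj (oids pre) (oids seg) -> lookup (pre ++ seg ++ post) c = Some oc.
Proof.
move=> h d; rewrite lookup_cat lookup_none; first by rewrite lookup_cat h.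
by apply/negP => /d; rewrite (lookup_in h).
Qed.

Lemma In_frame (pre seg post : seq obj) (o : obj) : List.In o seg -> List.In o (pre ++ seg ++ post).
Proof.
have catl : forall (a b : seq obj), List.In o a -> List.In o (a ++ b).
  by move=> a b; elim: a => //= x a IH [->|/IH]; [left|right].
have catr : forall (a b : seq obj), List.In o b -> List.In o (a ++ b).
  by move=> a b hb; elim: a => //= x a IH; right.
by move=> h; apply: catr; apply: catl.
Qed.

Definition lstep (a b : seq obj) := forall q, step (Conf q a) (Conf q b).
Definition R := clos_refl_trans (seq obj) lstep.

Lemma step_oids q a b : step (Conf q a) (Conf q b) -> oids b = oids a.
Proof. move=> H; inversion H; subst; exact: upd_oids. Qed.

Lemma R_oids a b : R a b -> oids b = oids a.
Proof.
elim => [x y h| x | x y z _ h1 _ h2]; [exact: (step_oids (h 0)) | by [] | by rewrite h2 h1].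
Qed.

Lemma frame_lstep pre seg seg' post : lstep seg seg' ->
  disj (oids pre) (oids seg) -> disj (oids post) (oids seg) ->
  lstep (pre ++ seg ++ post) (pre ++ seg' ++ post).
Proof.
move=> H d1 d2 q; have Hs := H q; inversion Hs; subst;
  (rewrite -upd_frame //=; last by apply: In_oids; eassumption);
  first [ solve [eapply r_att_succ; eauto using In_frame, lookup_frame]
        | solve [eapply r_def_succ; eauto using In_frame, lookup_frame]
        | solve [eapply r_leaf_fail; eauto using In_frame, lookup_frame]
        | solve [eapply r_or_succ; eauto using In_frame, lookup_frame]
        | solve [eapply r_or_rm; eauto using In_frame, lookup_frame]
        | solve [eapply r_or_fail; eauto using In_frame, lookup_frame]
        | solve [eapply r_and_rm; eauto using In_frame, lookup_frame]
        | solve [eapply r_and_fail; eauto using In_frame, lookup_frame]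
        | solve [eapply r_and_succ; eauto using In_frame, lookup_frame]
        | solve [eapply r_sand_rm; eauto using In_frame, lookup_frame]
        | solve [eapply r_sand_fail; eauto using In_frame, lookup_frame]
        | solve [eapply r_sand_succ; eauto using In_frame, lookup_frame]
        | solve [eapply r_not_fail; eauto using In_frame, lookup_frame]
        | solve [eapply r_not_succ; eauto using In_frame, lookup_frame] ].
Qed.

Lemma frame_R pre seg seg' post : R seg seg' ->
  disj (oids pre) (oids seg) -> disj (oids post) (oids seg) ->
  R (pre ++ seg ++ post) (pre ++ seg' ++ post).
Proof.
move=> H; elim: H => [x y h| x | x y z h1 IH1 h2 IH2] d1 d2.
- by apply: rt_step; apply: frame_lstep.
- exact: rt_refl.
- have e := R_oids h1.
  apply: rt_trans (IH1 d1 d2) _; apply: IH2; by rewrite e.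
Qed.

Lemma R_crt q a b : R a b -> clos_refl_trans term step (Conf q a) (Conf q b).
Proof.
elim => [x y h| x | x y z _ h1 _ h2]; [exact: rt_step | exact: rt_refl | exact: rt_trans h2].
Qed.

Definition reach T n (P : obj -> Prop) :=
  exists s, R (enc T n).1 s /\ exists o, lookup s n = Some o /\ P o.

Lemma lookup_head g s : lookup (g :: s) (oid g) = Some g.
Proof. by rewrite /lookup /= eqxx. Qed.

Lemma reach_triv T n : reach T n (fun _ => True).
Proof.
have [h [r [e1 e2]]] := enc_head T n.
exists (enc T n).1; split; first exact: rt_refl.
by exists h; rewrite e1 -e2 lookup_head.
Qed.

Lemma reach_weak T n (P Q : obj -> Prop) : (forall o, P o -> Q o) -> reach T n P -> reach T n Q.
Proof. by move=> PQ [s [h [o [h1 h2]]]]; exists s; split => //; exists o; split => //; apply: PQ. Qed.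

Lemma disj_range a b c s1 s2 : inr_ a b s1 -> inr_ b c s2 ->
  disj (oids s1) (oids s2) /\ disj (oids s2) (oids s1).
Proof.
move=> /allP h1 /allP h2; split => i.
- move=> /h1 /andP [_ x]; apply/negP => /h2 /andP [y _].
  by move: (leq_ltn_trans y x); rewrite ltnn.
- move=> /h2 /andP [y _]; apply/negP => /h1 /andP [_ x].
  by move: (leq_ltn_trans y x); rewrite ltnn.
Qed.

Lemma disj_nil s : disj (oids [::]) s.
Proof. by []. Qed.

Lemma encl_sim cs : forall k (Phi : nat -> obj -> Prop),
  (forall i, i < size cs -> forall n, reach (nth DefL cs i) n (Phi i)) ->
  exists s, R (encl cs k).1.1 s /\ forall i, i < size cs ->
    exists o, lookup s (nth 0 (encl cs k).1.2 i) = Some o /\ Phi i o.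
Proof.
elim: cs => [|c cs IH] k Phi H.
  by exists [::]; split; [exact: rt_refl | by []].
rewrite encl_cons /=.
have [s1 [h1 [o1 [l1 p1]]]] := H 0 erefl k.
have [s2 [h2 l2]] := IH (enc c k).2 (fun i => Phi i.+1) (fun i hi => H i.+1 hi).
have [_ r1] := enc_range c k.
have [_ [r2 _]] := encl_range_all cs (enc c k).2.
have [d1 d2] := disj_range r1 r2.
have e1 := R_oids h1.
exists (s1 ++ s2); split.
- apply: (rt_trans _ _ _ (s1 ++ (encl cs (enc c k).2).1.1)).
  + have := frame_R (pre := [::]) (post := (encl cs (enc c k).2).1.1) h1 (@disj_nil _) d2.
    by [].
  + have := frame_R (pre := s1) (post := [::]) h2; rewrite !cats0; apply => //.
    * by rewrite e1.
- case => [|i] hi /=.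
  + by exists o1; rewrite lookup_cat l1.
  + have [o [lo po]] := l2 i hi; exists o; split => //.
    rewrite lookup_cat lookup_none //; rewrite e1.
    apply/negP => hh; have := d1 _ hh.
    by rewrite -(R_oids h2) (lookup_in lo).
Qed.

Lemma upd_gate g g' s : oid g' = oid g -> oid g \notin oids s -> upd (g :: s) g' = g' :: s.
Proof. move=> e hn; have h := @upd_notin s g'; rewrite e in h; move: (h hn); rewrite /upd /= e eqxx => -> //. Qed.

Lemma lookup_gate g s x o : oid g \notin oids s -> lookup s x = Some o -> lookup (g :: s) x = Some o.
Proof.
move=> hn hl; have hx := lookup_in hl; move: hl; rewrite /lookup /=; case: eqP => [e|_] //.
by move: hn; rewrite e hx.
Qed.

Lemma gate_children K ti co cs n (Phi : nat -> obj -> Prop) :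
  (forall i, i < size cs -> forall m, reach (nth DefL cs i) m (Phi i)) ->
  exists s, R (gate K ti co cs n).1 (mk_node n K ti co 0 (encl cs n.+1).1.2 :: s) /\
    n \notin oids s /\
    forall i, i < size cs -> exists o, lookup s (nth 0 (encl cs n.+1).1.2 i) = Some o /\ Phi i o.
Proof.
move=> H; have [s [h l]] := encl_sim n.+1 H.
have [_ [r _]] := encl_range_all cs n.+1.
have hn : n \notin oids (encl cs n.+1).1.1.
  by apply/negP => /(allP r) /andP [hh _]; rewrite ltnn in hh.
exists s; split; last split => //.
- have := frame_R (pre := [:: mk_node n K ti co 0 (encl cs n.+1).1.2]) (post := [::]) h.
  rewrite !cats0; apply => //.
  by move=> i; rewrite inE => /eqP ->.
- by rewrite (R_oids h).
Qed.

Lemma choice_list (P : nat -> nat -> Prop) k : (forall i, i < k -> exists t, P i t) ->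
  exists ts, size ts = k /\ forall i, i < k -> P i (nth 0 ts i).
Proof.
elim: k P => [|k IH] P H; first by exists [::].
have [t0 h0] := H 0 erefl.
have [ts [e h]] := IH (fun i => P i.+1) (fun i hi => H i.+1 hi).
by exists (t0 :: ts); split; [rewrite /= e | case].
Qed.

Lemma step_gate q g g' s : step (Conf q (g :: s)) (Conf q (upd (g :: s) g')) ->
  oid g' = oid g -> oid g \notin oids s -> step (Conf q (g :: s)) (Conf q (g' :: s)).
Proof. by move=> h e hn; rewrite -(@upd_gate g g' s). Qed.

Lemma and_loop s n ti co : n \notin oids s -> forall l ts ag a ac u,
  size ts = size l ->
  (forall i, i < size l -> exists o, lookup s (nth 0 l i) = Some o /\
     ostatus o = Succeed /\ acctime o = nth 0 ts i) ->
  exists ag' ac' u', R (Obj n KAnd ti co ag a ac u l Unknown :: s)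
    (Obj n KAnd ti co ag' (maxn a (foldr maxn 0 ts)) ac' u' [::] Unknown :: s).
Proof.
move=> hn; elim => [|x l IH] [|t ts] ag a ac u //= e H.
  by exists ag, ac, u; rewrite maxn0; exact: rt_refl.
have [o [lo [so to]]] := H 0 erefl.
set g := Obj n KAnd ti co ag a ac u (x :: l) Unknown.
have st : lstep (g :: s) (Obj n KAnd ti co (ag + agents o) (maxn a (acctime o))
    (ac + acccost o) (x :: used o ++ u) (rem x (x :: l)) Unknown :: s).
  move=> q; apply: (step_gate (g:=g)) => //.
  apply: (@r_and_rm q (g :: s) g x o) => //; first by left.
  - exact: mem_head.
  - exact: lookup_gate.
rewrite /= eqxx to in st.
have [ag' [ac' [u' h]]] := IH ts (ag + agents o) (maxn a t) (ac + acccost o)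
  (x :: used o ++ u) (eq_add_S _ _ e) (fun i hi => H i.+1 hi).
exists ag', ac', u'; apply: rt_trans (rt_step _ _ _ _ st) _.
by rewrite maxnA.
Qed.

Lemma sand_loop s n ti co : n \notin oids s -> forall l1 rest ts ag a ac u,
  size ts = size l1 ->
  (forall i, i < size l1 -> exists o, lookup s (nth 0 l1 i) = Some o /\
     ostatus o = Succeed /\ acctime o = nth 0 ts i) ->
  exists ag' ac' u', R (Obj n KSand ti co ag a ac u (l1 ++ rest) Unknown :: s)
    (Obj n KSand ti co ag' (a + sumn ts) ac' u' rest Unknown :: s).
Proof.
move=> hn; elim => [|x l IH] rest [|t ts] ag a ac u //= e H.
  by exists ag, ac, u; rewrite addn0; exact: rt_refl.
have [o [lo [so to]]] := H 0 erefl.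
set g := Obj n KSand ti co ag a ac u (x :: l ++ rest) Unknown.
have st : lstep (g :: s) (Obj n KSand ti co (maxn ag (agents o)) (a + acctime o)
    (ac + acccost o) (x :: used o ++ u) (l ++ rest) Unknown :: s).
  move=> q; apply: (step_gate (g:=g)) => //.
  apply: (@r_sand_rm q (g :: s) g x (l ++ rest) o) => //; first by left.
  - exact: lookup_gate.
rewrite /= to in st.
have [ag' [ac' [u' h]]] := IH rest ts (maxn ag (agents o)) (a + t) (ac + acccost o)
  (x :: used o ++ u) (eq_add_S _ _ e) (fun i hi => H i.+1 hi).
exists ag', ac', u'; apply: rt_trans (rt_step _ _ _ _ st) _.
by rewrite addnA.
Qed.

Lemma or_loop s n ti co : n \notin oids s -> forall l ag a ac u,
  (forall i, i < size l -> exists o, lookup s (nth 0 l i) = Some o /\ ostatus o = Fail) ->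
  R (Obj n KOr ti co ag a ac u l Unknown :: s) (Obj n KOr ti co ag a ac u [::] Unknown :: s).
Proof.
move=> hn; elim => [|x l IH] ag a ac u H; first exact: rt_refl.
have [o [lo so]] := H 0 erefl.
set g := Obj n KOr ti co ag a ac u (x :: l) Unknown.
have st : lstep (g :: s) (Obj n KOr ti co ag a ac u (rem x (x :: l)) Unknown :: s).
  move=> q; apply: (step_gate (g:=g)) => //.
  apply: (@r_or_rm q (g :: s) g x o) => //; first by left.
  - exact: mem_head.
  - exact: lookup_gate.
rewrite /= eqxx in st.
apply: rt_trans (rt_step _ _ _ _ st) _.
exact: IH (fun i hi => H i.+1 hi).
Qed.

Lemma In_idx (c : adt) cs : List.In c cs -> exists2 i, i < size cs & nth DefL cs i = c.
Proof.
elim: cs => //= d cs IH [->|/IH [i hi e]]; first by exists 0.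
by exists i.+1.
Qed.

Lemma nth_In cs i : i < size cs -> List.In (nth DefL cs i) cs.
Proof. elim: cs i => //= d cs IH [|i] hi; [by left | right; exact: IH]. Qed.

Lemma In_catl (d : adt) pre post : List.In d pre -> List.In d (pre ++ post).
Proof. by elim: pre => //= x pre IH [->|/IH]; [left|right]. Qed.

Lemma In_catr (d : adt) pre post : List.In d post -> List.In d (pre ++ post).
Proof. by move=> h; elim: pre => //= x pre IH; right. Qed.

Lemma succ_att_inv ti co t : succ (AttL ti co) t -> t = ti.
Proof. by move=> H; inversion H. Qed.
Lemma succ_def_inv t : succ DefL t -> t = 0.
Proof. by move=> H; inversion H. Qed.
Lemma succ_or_inv ti co cs t : succ (OrG ti co cs) t ->
  exists c t0, List.In c cs /\ succ c t0 /\ t = ti + t0.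
Proof. move=> H; inversion H; subst; eauto. Qed.
Lemma succ_and_inv ti co cs t : succ (AndG ti co cs) t -> exists ts, size ts = size cs /\
  (forall i, i < size cs -> succ (nth DefL cs i) (nth 0 ts i)) /\ t = ti + foldr maxn 0 ts.
Proof. move=> H; inversion H; subst; eauto. Qed.
Lemma succ_sand_inv ti co cs t : succ (SandG ti co cs) t -> exists ts, size ts = size cs /\
  (forall i, i < size cs -> succ (nth DefL cs i) (nth 0 ts i)) /\ t = ti + sumn ts.
Proof. move=> H; inversion H; subst; eauto. Qed.
Lemma succ_not_inv ti co c t : succ (NotG ti co c) t -> fails c /\ t = ti.
Proof. move=> H; inversion H; subst; eauto. Qed.
Lemma fails_or_inv ti co cs : fails (OrG ti co cs) -> forall c, List.In c cs -> fails c.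
Proof. move=> H; inversion H; subst; eauto. Qed.
Lemma fails_and_inv ti co cs : fails (AndG ti co cs) -> exists c, List.In c cs /\ fails c.
Proof. move=> H; inversion H; subst; eauto. Qed.
Lemma fails_sand_inv ti co cs : fails (SandG ti co cs) -> exists pre c post,
  cs = pre ++ c :: post /\ (forall d, List.In d pre -> exists t, succ d t) /\ fails c.
Proof. move=> H; inversion H; subst; do 3 eexists; eauto. Qed.
Lemma fails_not_inv ti co c : fails (NotG ti co c) -> exists t, succ c t.
Proof. move=> H; inversion H; subst; eauto. Qed.

Definition SuccP t (o : obj) := ostatus o = Succeed /\ acctime o = t.
Definition FailP (o : obj) := ostatus o = Fail.

Lemma sim T : (forall t, succ T t -> forall n, reach T n (SuccP t)) /\
              (fails T -> forall n, reach T n FailP).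
Proof.
elim/adt_ind2: T => [ti co||ti co cs IH|ti co cs IH|ti co cs IH|ti co c IH].
- split.
  + move=> t /succ_att_inv -> n; rewrite /reach /=.
    set g' := Obj n KAtt ti co 1 ti co [::] [::] Succeed.
    exists [:: g']; split; last by exists g'; split; [exact: (lookup_head g' [::]) | ].
    apply: rt_step => q; apply: (step_gate (g := mk_node n KAtt ti co 1 [::])) => //.
    apply: (@r_att_succ q _ (mk_node n KAtt ti co 1 [::])) => //; by left.
  + move=> _ n; rewrite /reach /=.
    set g' := set_status (mk_node n KAtt ti co 1 [::]) Fail.
    exists [:: g']; split; last by exists g'; split; [exact: (lookup_head g' [::]) | ].
    apply: rt_step => q; apply: (step_gate (g := mk_node n KAtt ti co 1 [::])) => //.
    apply: (@r_leaf_fail q _ (mk_node n KAtt ti co 1 [::])) => //; by [left | left].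
- split.
  + move=> t /succ_def_inv -> n; rewrite /reach /=.
    set g' := set_status (mk_node n KDef 0 0 0 [::]) Succeed.
    exists [:: g']; split; last by exists g'; split; [exact: (lookup_head g' [::]) | ].
    apply: rt_step => q; apply: (step_gate (g := mk_node n KDef 0 0 0 [::])) => //.
    apply: (@r_def_succ q _ (mk_node n KDef 0 0 0 [::])) => //; by left.
  + move=> _ n; rewrite /reach /=.
    set g' := set_status (mk_node n KDef 0 0 0 [::]) Fail.
    exists [:: g']; split; last by exists g'; split; [exact: (lookup_head g' [::]) | ].
    apply: rt_step => q; apply: (step_gate (g := mk_node n KDef 0 0 0 [::])) => //.
    apply: (@r_leaf_fail q _ (mk_node n KDef 0 0 0 [::])) => //; by [left | right].
- split.
  + move=> t /succ_or_inv [c [t0 [hin [hs ->]]]] n.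
    have [_ [_ sl]] := encl_range_all cs n.+1.
    have [i hi ei] := In_idx hin.
    pose Phi := fun j => if j == i then SuccP t0 else fun _ : obj => True.
    have hP : forall j, j < size cs -> forall m, reach (nth DefL cs j) m (Phi j).
      move=> j hj m; rewrite /Phi; case: eqP => [->|_]; last exact: reach_triv.
      rewrite ei; exact: (IH c hin).1 t0 hs m.
    have [s [hR [hn hl]]] := @gate_children KOr ti co cs n Phi hP.
    have [o [lo po]] := hl i hi; rewrite /Phi eqxx in po; case: po => so to.
    set l := (encl cs n.+1).1.2 in hR hl lo.
    set g := mk_node n KOr ti co 0 l.
    set g' := Obj n KOr ti co (agents o) (ti + acctime o) (co + acccost o)
                (nth 0 l i :: used o ++ [::]) [::] Succeed.
    rewrite /reach enc_Or; exists (g' :: s); split.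
    * apply: rt_trans hR _; apply: rt_step => q; apply: (step_gate (g := g)) => //.
      apply: (@r_or_succ q (g :: s) g (nth 0 l i) o) => //; first by left.
      - by apply: mem_nth; rewrite /l sl.
      - exact: lookup_gate.
    * by exists g'; split; [exact: (lookup_head g' s) | split => //=; rewrite to].
  + move=> /fails_or_inv hf n.
    have [_ [_ sl]] := encl_range_all cs n.+1.
    pose Phi := fun j : nat => FailP.
    have hP : forall j, j < size cs -> forall m, reach (nth DefL cs j) m (Phi j).
      move=> j hj m; exact: (IH _ (nth_In hj)).2 (hf _ (nth_In hj)) m.
    have [s [hR [hn hl]]] := @gate_children KOr ti co cs n Phi hP.
    set l := (encl cs n.+1).1.2 in hR hl.
    set g := mk_node n KOr ti co 0 [::].
    have hl' : forall i, i < size l -> exists o, lookup s (nth 0 l i) = Some o /\ ostatus o = Fail.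
      by move=> i; rewrite /l sl => /hl.
    have h1 := @or_loop s n ti co hn l 0 0 0 [::] hl'.
    set g' := set_status g Fail.
    rewrite /reach enc_Or; exists (g' :: s); split.
    * apply: rt_trans hR _; apply: rt_trans h1 _.
      apply: rt_step => q; apply: (step_gate (g := g)) => //.
      apply: (@r_or_fail q (g :: s) g) => //; by left.
    * by exists g'; split; [exact: (lookup_head g' s) | ].
- split.
  + move=> t /succ_and_inv [ts [ets [hs ->]]] n.
    have [_ [_ sl]] := encl_range_all cs n.+1.
    pose Phi := fun j => SuccP (nth 0 ts j).
    have hP : forall j, j < size cs -> forall m, reach (nth DefL cs j) m (Phi j).
      move=> j hj m; exact: (IH _ (nth_In hj)).1 _ (hs j hj) m.
    have [s [hR [hn hl]]] := @gate_children KAnd ti co cs n Phi hP.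
    set l := (encl cs n.+1).1.2 in hR hl.
    have hl' : forall i, i < size l -> exists o, lookup s (nth 0 l i) = Some o /\
        ostatus o = Succeed /\ acctime o = nth 0 ts i.
      move=> i; rewrite /l sl => /hl [o [h1 [h2 h3]]]; by exists o.
    have [ag' [ac' [u' h1]]] := @and_loop s n ti co hn l ts 0 0 0 [::] (etrans ets (esym sl)) hl'.
    set g := Obj n KAnd ti co ag' (maxn 0 (foldr maxn 0 ts)) ac' u' [::] Unknown.
    set g' := Obj n KAnd ti co ag' (ti + maxn 0 (foldr maxn 0 ts)) (co + ac') u' [::] Succeed.
    rewrite /reach enc_And; exists (g' :: s); split.
    * apply: rt_trans hR _; apply: rt_trans h1 _.
      apply: rt_step => q; apply: (step_gate (g := g)) => //.
      apply: (@r_and_succ q (g :: s) g) => //; by left.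
    * by exists g'; split; [exact: (lookup_head g' s) | split => //=; rewrite max0n].
  + move=> /fails_and_inv [c [hin hf]] n.
    have [_ [_ sl]] := encl_range_all cs n.+1.
    have [i hi ei] := In_idx hin.
    pose Phi := fun j => if j == i then FailP else fun _ : obj => True.
    have hP : forall j, j < size cs -> forall m, reach (nth DefL cs j) m (Phi j).
      move=> j hj m; rewrite /Phi; case: eqP => [->|_]; last exact: reach_triv.
      rewrite ei; exact: (IH c hin).2 hf m.
    have [s [hR [hn hl]]] := @gate_children KAnd ti co cs n Phi hP.
    have [o [lo po]] := hl i hi; rewrite /Phi eqxx in po.
    set l := (encl cs n.+1).1.2 in hR hl lo.
    set g := mk_node n KAnd ti co 0 l.
    set g' := set_status g Fail.
    rewrite /reach enc_And; exists (g' :: s); split.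
    * apply: rt_trans hR _; apply: rt_step => q; apply: (step_gate (g := g)) => //.
      apply: (@r_and_fail q (g :: s) g (nth 0 l i) o) => //; first by left.
      - by apply: mem_nth; rewrite /l sl.
      - exact: lookup_gate.
    * by exists g'; split; [exact: (lookup_head g' s) | ].
- split.
  + move=> t /succ_sand_inv [ts [ets [hs ->]]] n.
    have [_ [_ sl]] := encl_range_all cs n.+1.
    pose Phi := fun j => SuccP (nth 0 ts j).
    have hP : forall j, j < size cs -> forall m, reach (nth DefL cs j) m (Phi j).
      move=> j hj m; exact: (IH _ (nth_In hj)).1 _ (hs j hj) m.
    have [s [hR [hn hl]]] := @gate_children KSand ti co cs n Phi hP.
    set l := (encl cs n.+1).1.2 in hR hl.
    have hl' : forall i, i < size l -> exists o, lookup s (nth 0 l i) = Some o /\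
        ostatus o = Succeed /\ acctime o = nth 0 ts i.
      move=> i; rewrite /l sl => /hl [o [h1 [h2 h3]]]; by exists o.
    have [ag' [ac' [u' h1]]] := @sand_loop s n ti co hn l [::] ts 0 0 0 [::] (etrans ets (esym sl)) hl'.
    rewrite cats0 in h1.
    set g := Obj n KSand ti co ag' (0 + sumn ts) ac' u' [::] Unknown.
    set g' := Obj n KSand ti co ag' (ti + (0 + sumn ts)) (co + ac') u' [::] Succeed.
    rewrite /reach enc_Sand; exists (g' :: s); split.
    * apply: rt_trans hR _; apply: rt_trans h1 _.
      apply: rt_step => q; apply: (step_gate (g := g)) => //.
      apply: (@r_sand_succ q (g :: s) g) => //; by left.
    * by exists g'; split; [exact: (lookup_head g' s) | split => //=; rewrite add0n].
  + move=> /fails_sand_inv [pre [c [post [ecs [hpre hf]]]]] n.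
    have [_ [_ sl]] := encl_range_all cs n.+1.
    set p := size pre.
    have hp : p < size cs by rewrite ecs size_cat /= addnS ltnS leq_addr.
    pose Phi := fun j => if j < p then (fun o : obj => ostatus o = Succeed)
                         else if j == p then FailP else fun _ : obj => True.
    have hP : forall j, j < size cs -> forall m, reach (nth DefL cs j) m (Phi j).
      move=> j hj m; rewrite /Phi; case: ifP => hjp.
      * have hin : List.In (nth DefL pre j) pre by exact: nth_In.
        have [t0 ht0] := hpre _ hin.
        have hin' : List.In (nth DefL pre j) cs by rewrite ecs; exact: In_catl.
        apply: (reach_weak (P := SuccP t0)); first by move=> o [].
        rewrite ecs nth_cat hjp; exact: (IH _ hin').1 _ ht0 m.
      * case: eqP => [->|_]; last exact: reach_triv.
        have hin' : List.In c cs by rewrite ecs; apply: In_catr; left.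
        rewrite ecs nth_cat ltnn subnn /=; exact: (IH _ hin').2 hf m.
    have [s [hR [hn hl]]] := @gate_children KSand ti co cs n Phi hP.
    set l := (encl cs n.+1).1.2 in hR hl.
    have hpl : p < size l by rewrite /l sl.
    have el : l = take p l ++ nth 0 l p :: drop p.+1 l
      by rewrite -drop_nth // cat_take_drop.
    have stp : size (take p l) = p by rewrite size_take hpl.
    have hch : forall i, i < p -> exists t, exists o, lookup s (nth 0 (take p l) i) = Some o /\
        ostatus o = Succeed /\ acctime o = t.
      move=> i hi; have [o [lo po]] := hl i (ltn_trans hi hp); rewrite /Phi hi in po.
      by exists (acctime o), o; rewrite nth_take.
    have [ts [ets hts]] := @choice_list (fun i t => exists o, lookup s (nth 0 (take p l) i) = Some o /\
        ostatus o = Succeed /\ acctime o = t) p hch.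
    have hl' : forall i, i < size (take p l) -> exists o, lookup s (nth 0 (take p l) i) = Some o /\
        ostatus o = Succeed /\ acctime o = nth 0 ts i.
      by rewrite stp.
    have [ag' [ac' [u' h1]]] := @sand_loop s n ti co hn (take p l) (nth 0 l p :: drop p.+1 l)
        ts 0 0 0 [::] (etrans ets (esym stp)) hl'.
    rewrite -el in h1.
    have [o [lo po]] := hl p hp; rewrite /Phi ltnn eqxx in po.
    set g := Obj n KSand ti co ag' (0 + sumn ts) ac' u' (nth 0 l p :: drop p.+1 l) Unknown.
    set g' := set_status g Fail.
    rewrite /reach enc_Sand; exists (g' :: s); split.
    * apply: rt_trans hR _; apply: rt_trans h1 _.
      apply: rt_step => q; apply: (step_gate (g := g)) => //.
      apply: (@r_sand_fail q (g :: s) g (nth 0 l p) (drop p.+1 l) o) => //; first by left.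
      exact: lookup_gate.
    * by exists g'; split; [exact: (lookup_head g' s) | ].
- have frameN : forall n s, R (enc c n.+1).1 s ->
      R (enc (NotG ti co c) n).1 (mk_node n KNot ti co 0 [:: n.+1] :: s) /\ n \notin oids s.
    move=> n s hR; have [_ r] := enc_range c n.+1.
    have hn : n \notin oids (enc c n.+1).1.
      by apply/negP => /(allP r) /andP [hh _]; rewrite ltnn in hh.
    split; last by rewrite (R_oids hR).
    have := frame_R (pre := [:: mk_node n KNot ti co 0 [:: n.+1]]) (post := [::]) hR.
    rewrite !cats0 enc_Not; apply => //.
    by move=> i; rewrite inE => /eqP ->.
  split.
  + move=> t /succ_not_inv [hf ->] n.
    have [s [hR [o [lo so]]]] := (IH.2 hf n.+1).
    have [h1 hn] := frameN n s hR.
    set g := mk_node n KNot ti co 0 [:: n.+1].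
    set g' := Obj n KNot ti co 0 ti co [::] [::] Succeed.
    exists (g' :: s); split.
    * apply: rt_trans h1 _; apply: rt_step => q; apply: (step_gate (g := g)) => //.
      apply: (@r_not_succ q (g :: s) g n.+1 o) => //; first by left.
      exact: lookup_gate.
    * by exists g'; split; [exact: (lookup_head g' s) | ].
  + move=> /fails_not_inv [t0 hs] n.
    have [s [hR [o [lo [so _]]]]] := (IH.1 t0 hs n.+1).
    have [h1 hn] := frameN n s hR.
    set g := mk_node n KNot ti co 0 [:: n.+1].
    set g' := set_status g Fail.
    exists (g' :: s); split.
    * apply: rt_trans h1 _; apply: rt_step => q; apply: (step_gate (g := g)) => //.
      apply: (@r_not_fail q (g :: s) g n.+1 o) => //; first by left.
      exact: lookup_gate.
    * by exists g'; split; [exact: (lookup_head g' s) | ].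
Qed.

Theorem theorem2 (T : adt) (t : nat) :
  min_time T t ->
  exists (a : nat) (SA SD : seq nat), rewrites_to_nf (encode T) (Summary a t SA SD).
Proof.
case=> hs _.
have [s [hR [o [lo [so to]]]]] := (sim T).1 t hs 0.
do 3 eexists; split.
- apply: rt_trans (R_crt 0 hR) _; apply: rt_step.
  rewrite -to; exact: (r_end lo so).
- by move=> v H; inversion H.
Qed.
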